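(* Let $\pi$ be a model with observation space $Y$ and parameter space $\Theta$, let $Y'$ be a space and $t:Y\to Y'$ a measurable function, and write $t^{-1}(y')=\{y\in Y: t(y)=y'\}$. Let $\pi'$ be the model with parameter space $\Theta$ and observation space $Y'$ given by $\pi'_{\text{prior}}(\theta)=\pi_{\text{prior}}(\theta)$ and $\pi'_{\text{obs}}(y'\mid\theta)=\int_{t^{-1}(y')}\pi_{\text{obs}}(y\mid\theta)\,\mathrm{d}y$ for all $\theta\in\Theta$, $y'\in Y'$. Let $f'$ be a test quantity for $\pi'$ and $\phi'$ a posterior family for $\pi'$ such that $\phi'$ passes continuous SBC (for model $\pi'$) with respect to $f'$. Define the test quantity $f(\theta,y)=f'(\theta,t(y))$ and the posterior family $\phi(\theta\mid y)=\phi'(\theta\mid t(y))$ on $\Theta$, $Y$. Then $\phi$ passes continuous SBC (for model $\pi$) with respect to $f$.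
   Context: A model on data space $Y$ and parameter space $\Theta$ is given by a prior density $\pi_{\text{prior}}(\theta)$ and observation density $\pi_{\text{obs}}(y\mid\theta)$; $\pi_{\text{marg}}(y)=\int_\Theta\pi_{\text{obs}}(y\mid\theta)\pi_{\text{prior}}(\theta)\,\mathrm{d}\theta$ and $\pi_{\text{post}}(\theta\mid y)=\pi_{\text{obs}}(y\mid\theta)\pi_{\text{prior}}(\theta)/\pi_{\text{marg}}(y)$. A posterior family is $\phi:\Theta\times Y\to\mathbb{R}^+$ with $\int_\Theta\phi(\theta\mid y)\,\mathrm{d}\theta=1$ for all $y$; a test quantity is a measurable $f:\Theta\times Y\to\mathbb{R}$. For a given model: $C_{\phi,f}(s\mid y)=\int_\Theta\mathbb{I}[f(\theta,y)\le s]\phi(\theta\mid y)\,\mathrm{d}\theta$, $D_{\phi,f}(s\mid y)=\int_\Theta\mathbb{I}[f(\theta,y)=s]\phi(\theta\mid y)\,\mathrm{d}\theta$; with $U\sim\mathrm{uniform}[0,1]$, $r_{\phi,f}(x\mid\tilde\theta,y)=\Pr\big(C_{\phi,f}(f(\tilde\theta,y)\mid y)-U\,D_{\phi,f}(f(\tilde\theta,y)\mid y)\le x\big)$, $q_{\phi,f}(x\mid y)=\int_\Theta\pi_{\text{post}}(\tilde\theta\mid y)r_{\phi,f}(x\mid\tilde\theta,y)\,\mathrm{d}\tilde\theta$. $\phi$ passes continuous SBC w.r.t. $f$ if $\int_Yq_{\phi,f}(x\mid y)\pi_{\text{marg}}(y)\,\mathrm{d}y=x$ for all $x\in[0,1]$.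 *)

(* Defs.v *)
From HB Require Import structures.
From mathcomp Require Import all_boot all_order all_algebra.
From mathcomp Require Import all_classical all_reals all_analysis.
Set Implicit Arguments. Unset Strict Implicit. Unset Printing Implicit Defensive.
Import Order.TTheory GRing.Theory Num.Theory.
Local Open Scope classical_set_scope.
Local Open Scope ring_scope.

(* Conventions: parameter space T (= Theta) with base measure muT, data space
   Y with base measure muY.  [obs th y] = pi_obs(y | th), [prior th] =
   pi_prior(th), [phi th y] = phi(th | y), [f th y] = f(th, y). *)

Section SBC.
Context {R : realType} {dT dY : measure_display}
  {T : measurableType dT} {Y : measurableType dY}.
Variables (muT : {measure set T -> \bar R}) (muY : {measure set Y -> \bar R}).

Definition is_model (prior : T -> R) (obs : T -> Y -> R) : Prop :=
  [/\ (forall th, 0 <= prior th),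
      measurable_fun setT prior
    & (\int[muT]_th (prior th)%:E = 1)%E] /\
  [/\ (forall th y, 0 <= obs th y),
      measurable_fun setT (fun z : T * Y => obs z.1 z.2)
    & forall th, (\int[muY]_y (obs th y)%:E = 1)%E].

Definition is_posterior_family (phi : T -> Y -> R) : Prop :=
  [/\ (forall th y, 0 <= phi th y),
      measurable_fun setT (fun z : T * Y => phi z.1 z.2)
    & forall y, (\int[muT]_th (phi th y)%:E = 1)%E].

Definition is_test_quantity (f : T -> Y -> R) : Prop :=
  measurable_fun setT (fun z : T * Y => f z.1 z.2).

Definition marg (prior : T -> R) (obs : T -> Y -> R) (y : Y) : \bar R :=
  \int[muT]_th (obs th y * prior th)%:E.

(* pi_post(th | y) (x / 0 = 0 convention where pi_marg(y) = 0) *)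
Definition post (prior : T -> R) (obs : T -> Y -> R) (th : T) (y : Y) : R :=
  obs th y * prior th / fine (marg prior obs y).

Definition Cfun (phi : T -> Y -> R) (f : T -> Y -> R) (s : R) (y : Y) : R :=
  fine (\int[muT]_(th in [set th | f th y <= s]) (phi th y)%:E).

Definition Dfun (phi : T -> Y -> R) (f : T -> Y -> R) (s : R) (y : Y) : R :=
  fine (\int[muT]_(th in [set th | f th y = s]) (phi th y)%:E).

(* r(x | th~, y) = Pr(C - U D <= x), U ~ uniform[0,1] *)
Definition rfun (phi : T -> Y -> R) (f : T -> Y -> R) (x : R) (tht : T) (y : Y)
  : \bar R :=
  (@lebesgue_measure R)
    [set u : R | 0 <= u <= 1 /\
       Cfun phi f (f tht y) y - u * Dfun phi f (f tht y) y <= x].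

Definition qfun (prior : T -> R) (obs : T -> Y -> R)
  (phi : T -> Y -> R) (f : T -> Y -> R) (x : R) (y : Y) : \bar R :=
  \int[muT]_tht ((post prior obs tht y)%:E * rfun phi f x tht y).

Definition passes_SBC (prior : T -> R) (obs : T -> Y -> R)
  (phi : T -> Y -> R) (f : T -> Y -> R) : Prop :=
  forall x : R, 0 <= x <= 1 ->
    (\int[muY]_y (qfun prior obs phi f x y * marg prior obs y) = x%:E)%E.

End SBC.

(* Main.v *)
Require Import Defs.
From HB Require Import structures.
From mathcomp Require Import all_boot all_order all_algebra.
From mathcomp Require Import all_classical all_reals all_analysis.
From mathcomp Require Import measurable_realfun.
Import Order.TTheory GRing.Theory Num.Theory.
Local Open Scope classical_set_scope.
Local Open Scope ring_scope.

Section LemA.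
Local Open Scope ereal_scope.
Context {R : realType} {dT dY : measure_display}
  {T : measurableType dT} {Y : measurableType dY}.
Variables (muT : {sigma_finite_measure set T -> \bar R})
  (muY : {sigma_finite_measure set Y -> \bar R}).
Variables (prior : T -> R) (ob : T -> Y -> R).
Hypothesis hp0 : forall th, (0 <= prior th)%R.
Hypothesis mp : measurable_fun setT prior.
Hypothesis hp1 : \int[muT]_th (prior th)%:E = 1.
Hypothesis ho0 : forall th y, (0 <= ob th y)%R.
Hypothesis mo : measurable_fun setT (fun z : T * Y => ob z.1 z.2).
Hypothesis ho1 : forall th, \int[muY]_y (ob th y)%:E = 1.

Local Notation m := (marg muT prior ob).

Let m_ge0 y : 0 <= m y.
Proof. by apply: integral_ge0 => th _; rewrite lee_fin mulr_ge0. Qed.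

Let F : Y * T -> \bar R := fun z => (ob z.2 z.1 * prior z.2)%:E.
Let F0 z : 0 <= F z. Proof. by rewrite lee_fin mulr_ge0. Qed.
Let mf : measurable_fun setT F.
Proof.
apply/measurable_EFinP; apply: measurable_funM.
  exact: (measurableT_comp mo (@measurable_swap _ _ Y T)).
exact: (measurableT_comp mp measurable_snd).
Qed.

Let mm : measurable_fun setT m.
Proof.
exact: (measurable_fun_fubini_tonelli_F _ mf F0).
Qed.

Let im : \int[muY]_y m y = 1.
Proof.
rewrite /marg.
rewrite (fubini_tonelli F mf F0) /F /=.
rewrite -hp1; apply: eq_integral => th _.
under eq_integral do rewrite EFinM muleC.
rewrite ge0_integralZl_EFin //.
- by rewrite ho1 mule1.
- by move=> y _; rewrite lee_fin.
- by apply/measurable_EFinP; exact: (measurable_fun_pair2 th mo).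
Qed.


Variable r : T -> Y -> \bar R.
Hypothesis hr0 : forall th y, 0 <= r th y.
Hypothesis hr1 : forall th y, r th y <= 1.
Hypothesis mr : measurable_fun setT (fun z : T * Y => r z.1 z.2).

Let G : Y * T -> \bar R := fun z => (ob z.2 z.1 * prior z.2)%:E * r z.2 z.1.
Let G0 z : 0 <= G z. Proof. by rewrite mule_ge0 // lee_fin mulr_ge0. Qed.
Let mG : measurable_fun setT G.
Proof.
apply: emeasurable_funM; first exact: mf.
exact: (measurableT_comp mr (@measurable_swap _ _ Y T)).
Qed.

Let mrhs : measurable_fun setT (fun y => \int[muT]_th G (y, th)).
Proof. exact: (measurable_fun_fubini_tonelli_F _ mG G0). Qed.

Lemma lemA : \int[muY]_y ((\int[muT]_th ((post muT prior ob th y)%:E * r th y)) * m y)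
  = \int[muY]_y \int[muT]_th ((ob th y * prior th)%:E * r th y).
Proof.
set N := [set y | m y = +oo].
have mN : measurable N by rewrite -[N]setTI; apply: (mm measurableT [set +oo]).
have N0 : muY N = 0.
  have : {ae muY, forall y, setT y -> m y \is a fin_num}.
    apply: integrable_ae => //; apply/integrableP; split => //.
    under eq_integral do rewrite gee0_abs //.
    by rewrite im ltry.
  case=> M [mM M0 sub]; apply/eqP; rewrite eq_le measure_ge0 andbT -M0.
  apply: le_measure; rewrite ?inE //.
  move=> y Ny; apply: sub => /= /(_ I); by rewrite Ny.
rewrite [RHS](ge0_negligible_integral _ _ _ _ N0) //; last first.
  by move=> y _; apply: integral_ge0 => th _; exact: (G0 (y, th)).
rewrite integral_mkcond; apply: eq_integral => y _; rewrite patchE.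
have [Ny|Ny] := pselect (N y).
  rewrite memNset; last by case.
  under eq_integral => th _ do rewrite /post Ny /= invr0 mulr0 mul0e.
  by rewrite integral0 mul0e.
rewrite mem_set //.
have mfin : m y \is a fin_num.
  by rewrite ge0_fin_numE // lt_neqAle leey andbT; apply/eqP.
set c := fine (m y).
have mc : m y = c%:E by rewrite fineK.
have [c0|c0] := eqVneq c 0%R.
  under eq_integral => th _ do rewrite /post -/c c0 invr0 mulr0 mul0e.
  rewrite integral0 mul0e; apply/esym/eqP; rewrite eq_le integral_ge0 ?andbT; last first.
    by move=> th _; exact: (G0 (y, th)).
  apply: (@le_trans _ _ (m y)); last by rewrite mc c0.
  rewrite /marg; apply: ge0_le_integral => //.
  - by move=> th _; exact: (G0 (y, th)).
  - exact: (measurable_fun_pair2 y mG).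
  - exact: (measurable_fun_pair2 y mf).
  - move=> th _; rewrite -[X in _ <= X]mule1; apply: lee_wpmul2l => //.
    by rewrite lee_fin mulr_ge0.
rewrite [in X in _ * X]mc -ge0_integralZr //; last 3 first.
- apply: emeasurable_funM; last exact: (measurable_fun_pair1 y mr).
  apply/measurable_EFinP; apply: measurable_funM; last exact: measurable_cst.
  by apply/measurable_EFinP; exact: (measurable_fun_pair2 y mf).
- by move=> th _; rewrite mule_ge0 // lee_fin /post -/c divr_ge0 // ?mulr_ge0 // -lee_fin -mc.
- by rewrite -mc.
apply: eq_integral => th _.
by rewrite muleAC -EFinM /post -/c divfK.
Qed.

End LemA.
Lemma mset_bool d (X : measurableType d) (b : X -> bool) :
  measurable_fun setT b -> measurable [set x | b x].
Proof. by move=> mb; rewrite -[X in measurable X]setTI; apply: (mb measurableT [set true]). Qed.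

Section Meas.
Local Open Scope ereal_scope.
Context {R : realType} {dT dY : measure_display}
  {T : measurableType dT} {Y : measurableType dY}.
Variables (muT : {sigma_finite_measure set T -> \bar R}).
Variables (phi f : T -> Y -> R).
Hypothesis mphi : measurable_fun setT (fun z : T * Y => phi z.1 z.2).
Hypothesis phi0 : forall th y, (0 <= phi th y)%R.
Hypothesis mf : measurable_fun setT (fun z : T * Y => f z.1 z.2).

Let mphi' : measurable_fun setT (fun q : (R * Y) * T => phi q.2 q.1.2).
Proof.
exact: (measurableT_comp mphi (measurable_fun_pair measurable_snd
  (measurableT_comp measurable_snd measurable_fst))).
Qed.

Let mf' : measurable_fun setT (fun q : (R * Y) * T => f q.2 q.1.2).
Proof.
exact: (measurableT_comp mf (measurable_fun_pair measurable_snd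
  (measurableT_comp measurable_snd measurable_fst))).
Qed.

Let m11 : measurable_fun setT (fun q : (R * Y) * T => q.1.1).
Proof. exact: (measurableT_comp measurable_fst measurable_fst). Qed.

Lemma measC : measurable_fun setT (fun p : R * Y => Cfun muT phi f p.1 p.2).
Proof.
pose A := [set q : (R * Y) * T | (f q.2 q.1.2 <= q.1.1)%R].
have mA : measurable A by apply: mset_bool; exact: measurable_fun_ler.
pose H : (R * Y) * T -> \bar R := fun q => (phi q.2 q.1.2 * \1_A q)%:E.
have mH : measurable_fun setT H.
  by apply/measurable_EFinP; apply: measurable_funM => //; exact: measurable_indic.
have H0 q : 0 <= H q by rewrite lee_fin mulr_ge0.
have -> : (fun p : R * Y => Cfun muT phi f p.1 p.2) = fine \o fubini_F muT H.
  apply/funext => -[s y]; rewrite /Cfun /fubini_F /= integral_mkcond.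
  congr fine; apply: eq_integral => th _; rewrite patchE /H indicE /=.
  have [h|h] := boolP (f th y <= s)%R.
    by rewrite !mem_set //= mulr1.
  by rewrite !memNset /= ?mulr0 //; apply/negP.
apply: measurableT_comp => //.
exact: (measurable_fun_fubini_tonelli_F _ mH H0).
Qed.

Lemma measD : measurable_fun setT (fun p : R * Y => Dfun muT phi f p.1 p.2).
Proof.
pose A := [set q : (R * Y) * T | (f q.2 q.1.2 == q.1.1)%R].
have mA : measurable A by apply: mset_bool; exact: measurable_fun_eqr.
pose H : (R * Y) * T -> \bar R := fun q => (phi q.2 q.1.2 * \1_A q)%:E.
have mH : measurable_fun setT H.
  by apply/measurable_EFinP; apply: measurable_funM => //; exact: measurable_indic.
have H0 q : 0 <= H q by rewrite lee_fin mulr_ge0.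
have -> : (fun p : R * Y => Dfun muT phi f p.1 p.2) = fine \o fubini_F muT H.
  apply/funext => -[s y]; rewrite /Dfun /fubini_F /= integral_mkcond.
  congr fine; apply: eq_integral => th _; rewrite patchE /H indicE /=.
  have [h|h] := eqVneq (f th y) s.
    by rewrite !mem_set //= ?mulr1 //; apply/eqP.
  rewrite !memNset /= ?mulr0 //.
    by apply/negP. by apply/eqP.
apply: measurableT_comp => //.
exact: (measurable_fun_fubini_tonelli_F _ mH H0).
Qed.

Variable x : R.

Definition SS : set ((T * Y) * measurableTypeR R) :=
  [set q | ((0 <= q.2 <= 1) &&
    (Cfun muT phi f (f q.1.1 q.1.2) q.1.2 - q.2 * Dfun muT phi f (f q.1.1 q.1.2) q.1.2 <= x))%R].

Lemma mSS : measurable SS.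
Proof.
have mz : measurable_fun setT (fun z : T * Y => (f z.1 z.2, z.2)).
  exact: measurable_fun_pair.
have mC : measurable_fun setT (fun z : T * Y => Cfun muT phi f (f z.1 z.2) z.2).
  exact: (measurableT_comp measC mz).
have mD : measurable_fun setT (fun z : T * Y => Dfun muT phi f (f z.1 z.2) z.2).
  exact: (measurableT_comp measD mz).
apply: mset_bool; apply: measurable_and; first apply: measurable_and.
- by apply: measurable_fun_ler => //; exact: measurable_snd.
- by apply: measurable_fun_ler => //; exact: measurable_snd.
apply: measurable_fun_ler => //; apply: measurable_funB.
  exact: (measurableT_comp mC measurable_fst).
apply: measurable_funM; first exact: measurable_snd.
exact: (measurableT_comp mD measurable_fst).
Qed.

Lemma rfunE th y : rfun muT phi f x th y = lebesgue_measure (xsection SS (th, y)).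
Proof.
rewrite /rfun; congr (lebesgue_measure _); apply/seteqP; split => u /=.
  by case=> /andP[h1 h2] h3; rewrite /xsection /= in_setE /SS /= h1 h2 h3.
by rewrite /xsection /= in_setE /SS /= => /andP[/andP[h1 h2] h3]; rewrite h1 h2.
Qed.

Lemma mrfun : measurable_fun setT (fun z : T * Y => rfun muT phi f x z.1 z.2).
Proof.
have -> : (fun z : T * Y => rfun muT phi f x z.1 z.2) = lebesgue_measure \o xsection SS.
  by apply/funext => -[th y]; rewrite rfunE.
exact: (measurable_fun_xsection _ mSS).
Qed.

Lemma rfun_ge0 th y : 0 <= rfun muT phi f x th y.
Proof. exact: measure_ge0. Qed.

Lemma rfun_le1 th y : rfun muT phi f x th y <= 1.
Proof.
rewrite rfunE; apply: (@le_trans _ _ (lebesgue_measure `[0%R, 1%R]%classic)).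
  apply: (@le_measure _ _ _ lebesgue_measure (xsection SS (th, y)) `[0%R, 1%R]%classic).
  - by rewrite inE; apply: measurable_xsection; exact: mSS.
  - by rewrite inE; exact: measurable_itv.
  - by move=> u; rewrite /xsection /= in_setE /SS /= => /andP[/andP[h1 h2] _]; rewrite /= in_itv /= h1 h2.
by rewrite lebesgue_measure_itv /= lte01 oppr0 adde0.
Qed.

End Meas.
Section LemB.
Local Open Scope ereal_scope.
Context {R : realType} {dY dY' : measure_display}
  {Y : measurableType dY} {Y' : measurableType dY'}.
Variables (muY : {sigma_finite_measure set Y -> \bar R})
  (muY' : {sigma_finite_measure set Y' -> \bar R}).
Variables (t : Y -> Y') (d : Y -> R) (d' : Y' -> R).
Hypothesis mt : measurable_fun setT t.
Hypothesis md : measurable_fun setT d.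
Hypothesis md' : measurable_fun setT d'.
Hypothesis d0 : forall y, (0 <= d y)%R.
Hypothesis d'0 : forall y, (0 <= d' y)%R.
Hypothesis H : forall B, measurable B ->
  \int[muY']_(y' in B) (d' y')%:E = \int[muY]_(y in t @^-1` B) (d y)%:E.

Let lamE (S : set (Y' * measurableTypeR R)) (mS : measurable S) w :
  lebesgue_measure (xsection S w) = \int[lebesgue_measure]_u (\1_S (w, u))%:E.
Proof.
by have := congr1 (fun g => g w) (indic_fubini_tonelli_FE lebesgue_measure mS).
Qed.

Lemma lemB (S : set (Y' * measurableTypeR R)) (mS : measurable S) (c : R) :
  (0 <= c)%R ->
  \int[muY]_y ((d y * c)%:E * lebesgue_measure (xsection S (t y)))
  = \int[muY']_y' ((d' y' * c)%:E * lebesgue_measure (xsection S y')).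
Proof.
move=> c0.
have mI : measurable_fun setT (\1_S : _ -> R) by exact: measurable_indic.
transitivity (\int[muY]_y \int[lebesgue_measure]_u
    ((d y * c)%:E * (\1_S (t y, u))%:E)).
  apply: eq_integral => y _; rewrite lamE // ge0_integralZl //;
    first [by rewrite lee_fin mulr_ge0 | by move=> u _; rewrite lee_fin |
      by apply/measurable_EFinP; exact: (measurable_fun_pair2 (t y) mI)].
transitivity (\int[muY']_y \int[lebesgue_measure]_u
    ((d' y * c)%:E * (\1_S (y, u))%:E)); last first.
  apply: eq_integral => y _; rewrite lamE // ge0_integralZl //;
    first [by rewrite lee_fin mulr_ge0 | by move=> u _; rewrite lee_fin |
      by apply/measurable_EFinP; exact: (measurable_fun_pair2 y mI)].
have e1 := fubini_tonelli (fun z : Y * measurableTypeR R =>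
    (d z.1 * c)%:E * (\1_S (t z.1, z.2))%:E).
have e2 := fubini_tonelli (fun z : Y' * measurableTypeR R =>
    (d' z.1 * c)%:E * (\1_S (z.1, z.2))%:E).
rewrite /= in e1 e2.
rewrite e1; last 2 first.
- apply: emeasurable_funM; apply/measurable_EFinP.
    apply: measurable_funM; last exact: measurable_cst.
    exact: (measurableT_comp md measurable_fst).
  apply: (measurableT_comp mI); apply: measurable_fun_pair => //.
  exact: (measurableT_comp mt measurable_fst).
- by move=> z; rewrite mule_ge0 // lee_fin ?mulr_ge0.
rewrite e2; last 2 first.
- apply: emeasurable_funM; apply/measurable_EFinP.
    apply: measurable_funM; last exact: measurable_cst.
    exact: (measurableT_comp md' measurable_fst).
  apply: (measurableT_comp mI); exact: measurable_fun_pair.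
- by move=> z; rewrite mule_ge0 // lee_fin ?mulr_ge0.
apply: eq_integral => u _.
set B := [set y' | S (y', u)].
have mB : measurable B.
  have -> : B = ysection S u by apply/seteqP; split => y'; rewrite /ysection /= in_setE.
  exact: measurable_ysection.
transitivity (\int[muY]_(y in t @^-1` B) (d y * c)%:E).
  rewrite [RHS]integral_mkcond; apply: eq_integral => y _; rewrite patchE indicE.
  have [h|h] := pselect (S (t y, u)).
    by rewrite !mem_set //= mule1.
  by rewrite !memNset //= mule0.
transitivity (\int[muY']_(y in B) (d' y * c)%:E); last first.
  rewrite [LHS]integral_mkcond; apply: eq_integral => y _; rewrite patchE indicE.
  have [h|h] := pselect (S (y, u)).
    by rewrite !mem_set //= mule1.
  by rewrite !memNset //= mule0.
have mtB : measurable (t @^-1` B) by rewrite -[X in measurable X]setTI; exact: mt.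
under eq_integral do rewrite EFinM.
under [RHS]eq_integral do rewrite EFinM.
rewrite ge0_integralZr //; last 2 first.
- by apply/measurable_EFinP; exact: measurable_funTS.
- by move=> y _; rewrite lee_fin.
rewrite [RHS]ge0_integralZr //; last 2 first.
- by apply/measurable_EFinP; exact: measurable_funTS.
- by move=> y _; rewrite lee_fin.
by rewrite H.
Qed.

End LemB.

Theorem theorem7 (R : realType) (dT dY dY' : measure_display)
  (T : measurableType dT) (Y : measurableType dY) (Y' : measurableType dY')
  (muT : {sigma_finite_measure set T -> \bar R})
  (muY : {sigma_finite_measure set Y -> \bar R})
  (muY' : {sigma_finite_measure set Y' -> \bar R})
  (prior : T -> R) (obs : T -> Y -> R)
  (t : Y -> Y') (obs' : T -> Y' -> R)
  (f' : T -> Y' -> R) (phi' : T -> Y' -> R) :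
  is_model muT muY prior obs ->
  measurable_fun setT t ->
  (* pi'_obs(y'|th) = int_{t^-1(y')} pi_obs(y|th) dy, i.e. obs'(.|th) is the
     density of the pushforward of pi_obs(.|th) dy under t *)
  (forall th y', 0 <= obs' th y') ->
  measurable_fun setT (fun z : T * Y' => obs' z.1 z.2) ->
  (forall th (B : set Y'), measurable B ->
     (\int[muY']_(y' in B) (obs' th y')%:E
        = \int[muY]_(y in t @^-1` B) (obs th y)%:E)%E) ->
  is_test_quantity f' ->
  is_posterior_family muT phi' ->
  passes_SBC muT muY' prior obs' phi' f' ->
  passes_SBC muT muY prior obs (fun th y => phi' th (t y)) (fun th y => f' th (t y)).
Proof.
move=> [[hp0 mp hp1] [ho0 mo ho1]] mt ho'0 mo' hpush hf' [hphi0 mphi hphi1] hSBC x hx.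
rewrite -(hSBC x hx) /qfun.
have ho'1 th : (\int[muY']_y (obs' th y)%:E = 1)%E.
  by rewrite hpush // preimage_setT ho1.
have mtt : measurable_fun setT (fun z : T * Y => (z.1, t z.2)).
  exact: (measurable_fun_pair measurable_fst (measurableT_comp mt measurable_snd)).
have mr := mrfun muT phi' f' mphi hphi0 hf' x.
etransitivity.
  exact: (lemA muT muY prior obs hp0 mp hp1 ho0 mo ho1
    (fun th y => rfun muT phi' f' x th (t y))
    (fun th y => rfun_ge0 muT phi' f' x th (t y))
    (fun th y => rfun_le1 muT phi' f' mphi hphi0 hf' x th (t y))
    (measurableT_comp mr mtt)).
etransitivity; last first.
  symmetry.
  exact: (lemA muT muY' prior obs' hp0 mp hp1 ho'0 mo' ho'1
    (fun th y => rfun muT phi' f' x th y)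
    (fun th y => rfun_ge0 muT phi' f' x th y)
    (fun th y => rfun_le1 muT phi' f' mphi hphi0 hf' x th y)
    mr).
have e1 := fubini_tonelli (fun z : Y * T =>
    ((obs z.2 z.1 * prior z.2)%:E * rfun muT phi' f' x z.2 (t z.1))%E).
have e2 := fubini_tonelli (fun z : Y' * T =>
    ((obs' z.2 z.1 * prior z.2)%:E * rfun muT phi' f' x z.2 z.1)%E).
rewrite /= in e1 e2.
rewrite e1; last 2 first.
- apply: emeasurable_funM.
    apply/measurable_EFinP; apply: measurable_funM.
      exact: (measurableT_comp mo (@measurable_swap _ _ Y T)).
    exact: (measurableT_comp mp measurable_snd).
  exact: (measurableT_comp mr (measurable_fun_pair measurable_snd (measurableT_comp mt measurable_fst))).
- by move=> z; rewrite mule_ge0 ?rfun_ge0 // lee_fin mulr_ge0.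
rewrite e2; last 2 first.
- apply: emeasurable_funM.
    apply/measurable_EFinP; apply: measurable_funM.
      exact: (measurableT_comp mo' (@measurable_swap _ _ Y' T)).
    exact: (measurableT_comp mp measurable_snd).
  exact: (measurableT_comp mr (@measurable_swap _ _ Y' T)).
- by move=> z; rewrite mule_ge0 ?rfun_ge0 // lee_fin mulr_ge0.
apply: eq_integral => th _.
pose S := (fun p : Y' * measurableTypeR R => ((th, p.1), p.2)) @^-1` SS muT phi' f' x.
have mg : measurable_fun setT (fun p : Y' * measurableTypeR R => ((th, p.1), p.2)).
  apply: measurable_fun_pair; last exact: measurable_snd.
  apply: measurable_fun_pair; [exact: measurable_cst | exact: measurable_fst].
have mS : measurable S.
  rewrite -[X in measurable X]setTI; apply: (mg measurableT).
  exact: (mSS muT phi' f' mphi hphi0 hf' x).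
have rE w : rfun muT phi' f' x th w = lebesgue_measure (xsection S w).
  rewrite rfunE; congr (lebesgue_measure _); apply/seteqP; split => u;
    by rewrite /xsection /= !in_setE.
under eq_integral do rewrite rE.
under [RHS]eq_integral do rewrite rE.
apply: lemB => //.
- exact: (measurable_fun_pair2 th mo).
- exact: (measurable_fun_pair2 th mo').
- by move=> B mB; rewrite hpush.
Qed.
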